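(* Let $q$ be a nonzero scalar and let $\mathcal A$ be an associative unital algebra over a field containing $q$, with elements $\psi,\chi$ and an invertible element $\Phi$ (standing for $q^{\phi/2}$) satisfying $$\Phi\psi=q\,\psi\Phi,\qquad \Phi\chi=q\,\chi\Phi,\qquad \psi\chi=\chi\psi.$$ Set $B=\Phi+\psi\Phi^{-1}\chi$ (standing for $q^{\beta/2}$) and assume $B$ is invertible; define $$\alpha=\Phi^{-1}\chi\Phi^{-1}\big(1+\psi\Phi^{-1}\chi\Phi^{-1}\big)^{-1},\qquad \gamma=\big(1+\Phi^{-1}\psi\Phi^{-1}\chi\big)^{-1}\Phi^{-1}\psi\Phi^{-1}$$ (so that $\alpha=\Phi^{-1}\chi B^{-1}$ and $\gamma=B^{-1}\psi\Phi^{-1}$, i.e. $B\gamma=\psi\Phi^{-1}$ and $\alpha B=\Phi^{-1}\chi$). Then $$\alpha B\gamma+B^{-1}=\Phi^{-1},$$ and $$B^2\alpha=q^2\alpha B^2,\qquad B^2\gamma=q^2\gamma B^2,\qquad \alpha\gamma=\gamma\alpha.$$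
   Context: Interpretation: these formulas equate, in the fundamental representation of $SL_q(2)$, the matrices $\begin{pmatrix} q^{\phi/2}+\psi q^{-\phi/2}\chi & \psi q^{-\phi/2}\\ q^{-\phi/2}\chi & q^{-\phi/2}\end{pmatrix}$ and $\begin{pmatrix} q^{\beta/2} & q^{\beta/2}\gamma\\ \alpha q^{\beta/2} & \alpha q^{\beta/2}\gamma+q^{-\beta/2}\end{pmatrix}$; here $\Phi=q^{\phi/2}$, $B=q^{\beta/2}$, and $B^2=q^{\beta}$. The relation $\Phi\psi=q\psi\Phi$ is the square-root form of $q^{\phi}\psi=q^2\psi q^{\phi}$. *)

(* Defs.v *)
From HB Require Import structures.
From mathcomp Require Import all_boot all_order all_algebra.
Set Implicit Arguments. Unset Strict Implicit. Unset Printing Implicit Defensive.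

(* Main.v *)
Require Import Defs.
From HB Require Import structures.
From mathcomp Require Import all_boot all_order all_algebra.
Import GRing.Theory.
Local Open Scope ring_scope.

Section S.
Variables (K : fieldType) (A : unitAlgType K) (q : K) (psi chi Phi : A).
Hypotheses (hPhi : Phi \is a GRing.unit)
    (hPhipsi : Phi * psi = q *: (psi * Phi))
    (hPhichi : Phi * chi = q *: (chi * Phi))
    (hpsichi : psi * chi = chi * psi).
Lemma psiPi : psi * Phi^-1 = q *: (Phi^-1 * psi).
Proof.
have -> : psi * Phi^-1 = Phi^-1 * (Phi * psi) * Phi^-1 by rewrite mulKr.
by rewrite hPhipsi -scalerAr -scalerAl !mulrA mulrK.
Qed.
Lemma chiPi : chi * Phi^-1 = q *: (Phi^-1 * chi).
Proof.
have -> : chi * Phi^-1 = Phi^-1 * (Phi * chi) * Phi^-1 by rewrite mulKr.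
by rewrite hPhichi -scalerAr -scalerAl !mulrA mulrK.
Qed.
Lemma PichiP : q *: (Phi^-1 * chi * Phi) = chi.
Proof. by rewrite -mulrA scalerAr -hPhichi mulKr. Qed.
Lemma PipsiP : q *: (Phi^-1 * psi * Phi) = psi.
Proof. by rewrite -mulrA scalerAr -hPhipsi mulKr. Qed.
Let B := Phi + psi * Phi^-1 * chi.
Let X := Phi^-1 * chi.
Let Y := psi * Phi^-1.
Lemma BX : B * X = q *: (X * B).
Proof.
rewrite /B /X mulrDl mulrDr scalerDr mulVKr // PichiP; congr (_ + _).
rewrite !mulrA -[Phi^-1 * chi * psi]mulrA -hpsichi !mulrA psiPi -!scalerAl.
by [].
Qed.
Lemma BY : B * Y = q *: (Y * B).
Proof.
rewrite /B /Y mulrDl mulrDr scalerDr mulrVK // mulrA hPhipsi -scalerAl mulrK //; congr (_ + _).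
rewrite !mulrA -[psi / Phi * chi * psi]mulrA -hpsichi !mulrA -[psi / Phi * psi * chi / Phi]mulrA chiPi -scalerAr !mulrA.
by [].
Qed.
Lemma Xpsi : q *: (X * psi) = psi * X.
Proof. by rewrite /X -mulrA -hpsichi mulrA scalerAl -psiPi !mulrA. Qed.
Lemma XY : X * Y = Y * X.
Proof.
rewrite /X /Y !mulrA -[Phi^-1*chi*psi]mulrA -hpsichi mulrA -[Phi^-1*psi*chi/Phi]mulrA chiPi psiPi -scalerAr -!scalerAl !mulrA.
by [].
Qed.
Hypothesis hB : B \is a GRing.unit.
Lemma I1 : 1 + psi*Phi^-1*chi*Phi^-1 = B*Phi^-1.
Proof. by rewrite /B mulrDl divrr. Qed.
Lemma I2 : 1 + Phi^-1*psi*Phi^-1*chi = Phi^-1*B.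
Proof. by rewrite /B mulrDr mulVr // !mulrA. Qed.
Lemma alphaE : Phi^-1*chi*Phi^-1*(1+psi*Phi^-1*chi*Phi^-1)^-1 = X*B^-1.
Proof. by rewrite I1 invrM ?unitrV // invrK !mulrA mulrVK. Qed.
Lemma gammaE : (1+Phi^-1*psi*Phi^-1*chi)^-1*Phi^-1*psi*Phi^-1 = B^-1*Y.
Proof. by rewrite I2 invrM ?unitrV // invrK mulrK // /Y mulrA. Qed.
Lemma BXB : B * X * B^-1 = q *: X.
Proof. by rewrite BX -scalerAl mulrK. Qed.
Lemma BYB : q *: (B^-1 * Y * B) = Y.
Proof. by rewrite -mulrA scalerAr -BY mulKr. Qed.
Lemma main_sec :
  let alpha := Phi^-1 * chi * Phi^-1 * (1 + psi * Phi^-1 * chi * Phi^-1)^-1 in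
  let gamma := (1 + Phi^-1 * psi * Phi^-1 * chi)^-1 * Phi^-1 * psi * Phi^-1 in
  [/\ alpha * B * gamma + B^-1 = Phi^-1,
      B ^+ 2 * alpha = q ^+ 2 *: (alpha * B ^+ 2),
      B ^+ 2 * gamma = q ^+ 2 *: (gamma * B ^+ 2)
    & alpha * gamma = gamma * alpha].
Proof.
move=> alpha gamma; rewrite /alpha /gamma alphaE gammaE.
have BBX : B*B*X = q^+2*:(X*B*B).
  by rewrite -mulrA BX -scalerAr mulrA BX -scalerAl scalerA expr2.
have BBY : B*B*Y = q^+2*:(Y*B*B).
  by rewrite -mulrA BY -scalerAr mulrA BY -scalerAl scalerA expr2.
split.
- rewrite mulrVK //; apply: (mulrI hB); rewrite mulrDr divrr // (mulrA X) (mulrA B) (mulrA B) BXB -I1 addrC.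
  congr (_ + _); rewrite /Y mulrA -scalerAl Xpsi /X !mulrA //.
- rewrite !expr2 mulrA BBX -scalerAl mulrK // [X*B^-1*(B*B)]mulrA mulrVK //.
- rewrite !expr2 mulrA mulrK //.
  have -> : B^-1*Y*(B*B) = B^-1*(Y*B*B) by rewrite !mulrA.
  by rewrite scalerAr -BBY !mulrA mulVr // mul1r.
- apply: (mulrI hB); apply: (mulIr hB).
  have E1 : B*(X/B*(B^-1*Y))*B = (B*X/B) * (B^-1*Y*B) by rewrite !mulrA.
  have E2 : B*(B^-1*Y*(X/B))*B = Y*X by rewrite !mulrA divrr // mul1r mulrVK.
  by rewrite E1 E2 BXB -scalerAl scalerAr BYB XY.
Qed.

End S.

Theorem mainTheorem2 (K : fieldType) (A : unitAlgType K) (q : K)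
    (psi chi Phi : A)
    (hq : q != 0)
    (hPhi : Phi \is a GRing.unit)
    (hPhipsi : Phi * psi = q *: (psi * Phi))
    (hPhichi : Phi * chi = q *: (chi * Phi))
    (hpsichi : psi * chi = chi * psi)
    (hB : Phi + psi * Phi^-1 * chi \is a GRing.unit) :
  let B := Phi + psi * Phi^-1 * chi in
  let alpha := Phi^-1 * chi * Phi^-1 * (1 + psi * Phi^-1 * chi * Phi^-1)^-1 in
  let gamma := (1 + Phi^-1 * psi * Phi^-1 * chi)^-1 * Phi^-1 * psi * Phi^-1 in
  [/\ alpha * B * gamma + B^-1 = Phi^-1,
      B ^+ 2 * alpha = q ^+ 2 *: (alpha * B ^+ 2),
      B ^+ 2 * gamma = q ^+ 2 *: (gamma * B ^+ 2)
    & alpha * gamma = gamma * alpha].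
Proof. exact: main_sec. Qed.
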